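(* Let $\beta,\gamma$ be real numbers with $0<\beta\le\gamma\le1$, let $m\ge0$ be an integer, let $\theta=(k_r)$ be a lacunary sequence and let $0<p<\infty$. Then $N_\theta^\beta(p,F,\Delta^m)\subset S_\theta^\gamma(F,\Delta^m)$ (and a sequence strongly $N_\theta^\beta(p,F,\Delta^m)$-summable to $X_0$ is $S_\theta^\gamma(F,\Delta^m)$-statistically convergent to $X_0$). Moreover, the inclusion is strict for some choices of $\beta$ and $\gamma$.
   Context: A fuzzy number is a map $X:\mathbb{R}\to[0,1]$ which is normal, fuzzy convex, upper semicontinuous, with compact closure of $\{t:X(t)>0\}$; $L(\mathbb{R})$ is the set of fuzzy numbers. Level sets $[X]^\alpha=\{t:X(t)\ge\alpha\}$ ($\alpha\in(0,1]$), $[X]^0=\overline{\{t:X(t)>0\}}$, are compact intervals $[u^\alpha,v^\alpha]$. Subtraction: $[X-Y]^\alpha=[u_1^\alpha-v_2^\alpha,v_1^\alpha-u_2^\alpha]$. Metric: $d(X,Y)=\sup_{\alpha\in[0,1]}\max\{|u_1^\alpha-u_2^\alpha|,|v_1^\alpha-v_2^\alpha|\}$. $(\Delta^0X)_k=X_k$, $(\Delta^1X)_k=X_k-X_{k+1}$, $(\Delta^mX)_k=(\Delta^1(\Delta^{m-1}X))_k$. A lacunary sequence is an increasing integer sequence $\theta=(k_r)_{r\ge0}$ with $k_0=0$, $h_r=k_r-k_{r-1}\to\infty$; $I_r=(k_{r-1},k_r]$. $S_\theta^\gamma(F,\Delta^m)$: sequences $X$ with some $X_0\in L(\mathbb{R})$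 such that for all $\varepsilon>0$, $\lim_r\frac{1}{h_r^\gamma}|\{k\in I_r:d(\Delta^mX_k,X_0)\ge\varepsilon\}|=0$. $N_\theta^\beta(p,F,\Delta^m)$: sequences $X$ with some $X_0\in L(\mathbb{R})$ (the limit) such that $\lim_r\frac{1}{h_r^\beta}\sum_{k\in I_r}d(\Delta^mX_k,X_0)^p=0$. *)

(* Defs.v *)
From HB Require Import structures.
From mathcomp Require Import all_boot all_order all_algebra.
From mathcomp Require Import all_classical all_reals all_analysis.
Set Implicit Arguments. Unset Strict Implicit. Unset Printing Implicit Defensive.
Import Order.TTheory GRing.Theory Num.Theory.
Import numFieldNormedType.Exports.
Local Open Scope classical_set_scope.
Local Open Scope ring_scope.

Section Fuzzy.
Variable R : realType.

Definition fuzzy_number (X : R -> R) : Prop :=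
  [/\ (forall t, 0 <= X t <= 1),
      (exists t, X t = 1),
      (forall s t l, 0 <= l <= 1 -> Num.min (X s) (X t) <= X (l * s + (1 - l) * t)),
      (forall t e, 0 < e -> exists2 d, 0 < d &
          forall s, `|s - t| < d -> X s < X t + e) &
      compact (closure [set t | 0 < X t])].

Definition lvl (X : R -> R) (a : R) : set R :=
  if 0 < a then [set t | a <= X t] else closure [set t | 0 < X t].

Definition lend (X : R -> R) (a : R) : R := inf (lvl X a).
Definition rend (X : R -> R) (a : R) : R := sup (lvl X a).

(* subtraction, defined through its level sets
   [X - Y]^a = [u1^a - v2^a, v1^a - u2^a]:
   (X - Y)(t) = sup {a in (0,1] | t in that interval} (0 if none). *)
Definition fsub (X Y : R -> R) : R -> R := fun t =>
  sup ([set 0] `|` [set a | 0 < a <= 1 /\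
        lend X a - rend Y a <= t <= rend X a - lend Y a]).

Definition fdist (X Y : R -> R) : R :=
  sup [set Num.max `|lend X a - lend Y a| `|rend X a - rend Y a|
      | a in `[0, 1]].

Fixpoint fdelta (m : nat) (X : nat -> R -> R) (k : nat) : R -> R :=
  match m with
  | 0 => X k
  | m'.+1 => fsub (fdelta m' X k) (fdelta m' X k.+1)
  end.

Definition fuzzy_seq (X : nat -> R -> R) : Prop := forall k, fuzzy_number (X k).

Definition lacunary (theta : nat -> nat) : Prop :=
  [/\ theta 0 = 0%N,
      (forall r, (theta r < theta r.+1)%N) &
      ((fun r => ((theta r.+1 - theta r)%N)%:R : R) @ \oo --> +oo)].

(* h_{r+1} = k_{r+1} - k_r ; I_{r+1} = (k_r, k_{r+1}] *)
Definition hlen (theta : nat -> nat) (r : nat) : nat := (theta r.+1 - theta r)%N.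
Definition Iblock (theta : nat -> nat) (r : nat) : seq nat :=
  iota (theta r).+1 (hlen theta r).

Definition S_conv (gamma : R) (theta : nat -> nat) (m : nat)
    (X : nat -> R -> R) (X0 : R -> R) : Prop :=
  forall eps : R, 0 < eps ->
    (fun r => (count (fun k => eps <= fdist (fdelta m X k) X0) (Iblock theta r))%:R
               / ((hlen theta r)%:R `^ gamma)) @ \oo --> (0 : R).

Definition N_conv (beta p : R) (theta : nat -> nat) (m : nat)
    (X : nat -> R -> R) (X0 : R -> R) : Prop :=
  (fun r => (\sum_(k <- Iblock theta r) fdist (fdelta m X k) X0 `^ p)
             / ((hlen theta r)%:R `^ beta)) @ \oo --> (0 : R).

Definition in_S (gamma : R) theta m (X : nat -> R -> R) : Prop :=
  fuzzy_seq X /\ exists X0, fuzzy_number X0 /\ S_conv gamma theta m X X0.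

Definition in_N (beta p : R) theta m (X : nat -> R -> R) : Prop :=
  fuzzy_seq X /\ exists X0, fuzzy_number X0 /\ N_conv beta p theta m X X0.

End Fuzzy.

(* Main.v *)
Require Import Defs.
From HB Require Import structures.
From mathcomp Require Import all_boot all_order all_algebra.
From mathcomp Require Import all_classical all_reals all_analysis.
From mathcomp Require Import lra zify.
Import Order.TTheory GRing.Theory Num.Theory.
Local Open Scope ring_scope.

Module Helpers.
Import numFieldNormedType.Exports.
Local Open Scope classical_set_scope.
Local Open Scope ring_scope.

Definition crisp {R : realType} (a : R) : R -> R := fun t => if t == a then 1 else 0.

Lemma sup_maxE {R : realType} (S : set R) x : S x -> (forall y, S y -> y <= x) -> sup S = x.
Proof.
move=> Sx ub; apply/le_anti/andP; split.
  by apply: ge_sup; [exists x|move=> y /ub].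
by apply: ub_le_sup => //; exists x => y /ub.
Qed.

Lemma closure_set1 {R : realType} (a : R) : closure [set a] = [set a].
Proof.
apply/esym/closure_id; apply: accessible_closed_set1.
apply: hausdorff_accessible; exact: Rhausdorff.
Qed.

Lemma crisp_support {R : realType} (a : R) : [set t | 0 < crisp a t] = [set a].
Proof.
apply/seteqP; split => t /=; rewrite /crisp.
  by case: eqP => // _; rewrite ltxx.
by move=> ->; rewrite eqxx ltr01.
Qed.

Lemma lvl_crisp {R : realType} (a al : R) : al <= 1 -> lvl (crisp a) al = [set a].
Proof.
move=> al1; rewrite /lvl; case: ifPn => al0; last by rewrite crisp_support closure_set1.
apply/seteqP; split => t /=; rewrite /crisp.
  by case: eqP => // _; rewrite leNgt al0.
by move=> ->; rewrite eqxx.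
Qed.

Lemma lend_crisp {R : realType} (a al : R) : al <= 1 -> lend (crisp a) al = a.
Proof. by move=> h; rewrite /lend lvl_crisp // inf1. Qed.
Lemma rend_crisp {R : realType} (a al : R) : al <= 1 -> rend (crisp a) al = a.
Proof. by move=> h; rewrite /rend lvl_crisp // sup1. Qed.

Lemma fsub_crisp {R : realType} (a b : R) : fsub (crisp a) (crisp b) = crisp (a - b).
Proof.
apply/funext => t; rewrite [RHS]/crisp /fsub.
case: eqP => [->|ne].
  apply: sup_maxE.
    rewrite /setU /=; right; split; first by rewrite ltr01 lexx.
    by rewrite !lend_crisp ?rend_crisp // lexx.
  by move=> y [->|[/andP[_ ->]]]; rewrite ?ler01.
apply: sup_maxE; first by rewrite /setU /=; left.
move=> y [->//|[/andP[y0 y1]]].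
rewrite lend_crisp // rend_crisp // lend_crisp // rend_crisp //.
by move=> /andP[h1 h2]; exfalso; apply: ne; apply/le_anti; rewrite h1 h2.
Qed.

Lemma fdist_crisp {R : realType} (a b : R) : fdist (crisp a) (crisp b) = `|a - b|.
Proof.
rewrite /fdist; apply: sup_maxE.
  exists 1; first by rewrite /= in_itv /= ler01 lexx.
  by rewrite !lend_crisp ?rend_crisp // maxxx.
move=> y [al]; rewrite /= in_itv /= => /andP[_ al1] <-.
by rewrite !lend_crisp ?rend_crisp // maxxx.
Qed.

Lemma crisp_fuzzy {R : realType} (a : R) : fuzzy_number (crisp a).
Proof.
split.
- by move=> t; rewrite /crisp; case: ifP; rewrite ?lexx ?ler01.
- by exists a; rewrite /crisp eqxx.
- move=> s t l _; rewrite /crisp.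
  case: (eqVneq s a) => [->|sa]; case: (eqVneq t a) => [->|ta].
  - have -> : l * a + (1 - l) * a = a. by rewrite -mulrDl subrKC mul1r. by rewrite eqxx minxx.
  - have := ge_min (crisp a (l * a + (1 - l) * t)) (1:R) 0; rewrite /crisp => ->.
    by case: eqP => _; rewrite ?lexx ?ler01 ?orbT.
  - have := ge_min (crisp a (l * s + (1 - l) * a)) (0:R) 1; rewrite /crisp => ->.
    by case: eqP => _; rewrite ?lexx ?ler01 ?orbT.
  - have := ge_min (crisp a (l * s + (1 - l) * t)) (0:R) 0; rewrite /crisp => ->.
    by case: eqP => _; rewrite ?lexx ?ler01 ?orbT.
- move=> x e e0; rewrite /crisp; case: (eqVneq x a) => [->|ta].
    exists 1 => // s _; case: (s == a); lra.
  exists `|x - a|; first by rewrite normr_gt0 subr_eq0.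
  move=> s st; case: (eqVneq s a) => [sa|]; last by rewrite add0r.
  by rewrite sa distrC ltxx in st.
- by rewrite crisp_support closure_set1; exact: compact_set1.
Qed.


Lemma sup_ge0_gen {R : realType} (E : set R) :
  (forall x, E x -> 0 <= x) -> E !=set0 -> 0 <= sup E.
Proof.
move=> h [y Ey].
have [hs|hs] := pselect (has_ubound E); last by rewrite sup_out // => -[].
exact: le_trans (h _ Ey) (ub_le_sup hs Ey).
Qed.

Lemma fdist_ge0 {R : realType} (X Y : R -> R) : 0 <= fdist X Y.
Proof.
apply: sup_ge0_gen.
  move=> _ [al _ <-].
  have := le_max 0 (`|lend X al - lend Y al|) (`|rend X al - rend Y al|).
  by rewrite normr_ge0.
by exists (Num.max `|lend X 0 - lend Y 0| `|rend X 0 - rend Y 0|); exists 0 => //; rewrite /= in_itv /= lexx ler01.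
Qed.

Lemma count_sum_le {R : realType} (P : pred nat) (F : nat -> R) (c : R) (s : seq nat) :
  (forall k, P k -> c <= F k) -> (forall k, 0 <= F k) ->
  (count P s)%:R * c <= \sum_(k <- s) F k.
Proof.
move=> hP h0; elim: s => [|k s IH]; first by rewrite big_nil mul0r.
rewrite big_cons /= natrD mulrDl; apply: lerD => //.
by case: (boolP (P k)) => /= Pk; rewrite ?mul1r ?hP // mul0r.
Qed.

Lemma hlen_ge1 (theta : nat -> nat) r : (forall r, (theta r < theta r.+1)%N) -> (1 <= hlen theta r)%N.
Proof. by move=> h; rewrite /hlen subn_gt0. Qed.

Lemma part1 {R : realType} (m : nat) (theta : nat -> nat) (p : R) beta gamma X X0 :
  lacunary R theta -> 0 < p -> 0 < beta -> beta <= gamma ->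
  N_conv beta p theta m X X0 -> S_conv gamma theta m X X0.
Proof.
move=> [_ Hinc _] p0 b0 bg HN eps eps0.
set c := eps `^ p.
have c0 : 0 < c by rewrite powR_gt0.
apply: (@squeeze_cvgr _ _ _ _ (fun=> 0) (fun r => (\sum_(k <- Iblock theta r) fdist (fdelta m X k) X0 `^ p)
             / ((hlen theta r)%:R `^ beta) * c^-1)); last first.
- have := @cvgMr_tmp R nat \oo _ _ 0 c^-1 HN; rewrite mul0r; apply; exact _.
- exact: cvg_cst.
apply: nearW => r.
have h1 : (1 : R) <= (hlen theta r)%:R by rewrite ler1n hlen_ge1.
have hg0 : 0 < (hlen theta r)%:R `^ gamma by rewrite powR_gt0 // (lt_le_trans ltr01).
have hb0 : 0 < (hlen theta r)%:R `^ beta by rewrite powR_gt0 // (lt_le_trans ltr01).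
apply/andP; split; first by rewrite divr_ge0 // ltW.
set S := \sum_(k <- _) _.
set n := (count _ _)%:R.
have hn : n * c <= S.
  apply: count_sum_le; last by move=> k; exact: powR_ge0.
  move=> k /= hk; have := ge0_ler_powR (ltW p0); apply => //.
    by rewrite nnegrE ltW.
  by rewrite nnegrE fdist_ge0.
rewrite mulrAC.

apply: ler_pM.
- by rewrite ler0n.
- by rewrite invr_ge0 ltW.
- by rewrite -(ler_pM2r c0) -mulrA mulVf ?mulr1 // gt_eqF.
- rewrite lef_pV2 ?posrE //; apply: ler_powR => //.
Qed.


Fixpoint rdelta {R : realType} (m : nat) (x : nat -> R) (k : nat) : R :=
  match m with 0 => x k | m'.+1 => rdelta m' x k - rdelta m' x k.+1 end.

Lemma fdelta_crisp {R : realType} m (x : nat -> R) k :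
  fdelta m (fun j => crisp (x j)) k = crisp (rdelta m x k).
Proof. by elim: m k => [|m IH] k //=; rewrite !IH fsub_crisp. Qed.

Lemma rdeltaS {R : realType} m (x : nat -> R) k :
  rdelta m.+1 x k = rdelta m (fun j => x j - x j.+1) k.
Proof. by elim: m k => [|m IH] k //=; rewrite -!IH. Qed.

Definition Tinv {R : realType} (y : nat -> R) (k : nat) : R := - \sum_(j < k) y j.

Lemma Tinv_delta {R : realType} (y : nat -> R) : (fun j => Tinv y j - Tinv y j.+1) = y.
Proof. by apply/funext => j; rewrite /Tinv big_ord_recr /=; lra. Qed.

Fixpoint Sinv {R : realType} (m : nat) (y : nat -> R) : nat -> R :=
  match m with 0 => y | m'.+1 => Tinv (Sinv m' y) end.

Lemma rdelta_Sinv {R : realType} m (y : nat -> R) k : rdelta m (Sinv m y) k = y k.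
Proof. by elim: m k => [|m IH] k //=; rewrite -/(rdelta m.+1 _ _) rdeltaS Tinv_delta. Qed.

Definition spike {R : realType} (theta : nat -> nat) (p : R) (k : nat) : R :=
  \sum_(r < k | (theta r).+1 == k) ((hlen theta r)%:R `^ p^-1).

Section Theta.
Lemma theta_mono (theta : nat -> nat) : (forall r, (theta r < theta r.+1)%N) ->
  forall r r', (r < r')%N -> (theta r < theta r')%N.
Proof. by move=> h r r'; apply: (homo_ltn ltn_trans h). Qed.

Lemma theta_mono_le (theta : nat -> nat) : (forall r, (theta r < theta r.+1)%N) ->
  forall r r', (r <= r')%N -> (theta r <= theta r')%N.
Proof.
move=> h r r'; rewrite leq_eqVlt => /orP[/eqP->//|/(theta_mono _ h)]; exact: ltnW.
Qed.

Lemma theta_inj (theta : nat -> nat) : (forall r, (theta r < theta r.+1)%N) ->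
  injective theta.
Proof.
move=> h r r' e; case: (ltngtP r r') => // /(theta_mono _ h); by rewrite e ltnn.
Qed.

Lemma theta_ge (theta : nat -> nat) : (forall r, (theta r < theta r.+1)%N) ->
  forall r, (r <= theta r)%N.
Proof. by move=> h; elim=> // r IH; apply: leq_ltn_trans IH (h r). Qed.
End Theta.

Lemma spike_at {R : realType} theta (p : R) r : (forall r, (theta r < theta r.+1)%N) ->
  spike theta p (theta r).+1 = (hlen theta r)%:R `^ p^-1.
Proof.
move=> h; rewrite /spike.
have hr : (r < (theta r).+1)%N by rewrite ltnS theta_ge.
rewrite (big_pred1 (Ordinal hr)) // => i /=.
by rewrite eqSS; apply/eqP/eqP => [/(theta_inj _ h) e|->]; [apply: val_inj|].
Qed.

Lemma spike_tail {R : realType} theta (p : R) r k : (forall r, (theta r < theta r.+1)%N) ->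
  ((theta r).+1 < k)%N -> (k <= theta r.+1)%N -> spike theta p k = 0.
Proof.
move=> h h1 h2; rewrite /spike big_pred0 // => i; apply/negP => /eqP e.
have a1 : (theta r < theta i)%N by rewrite -ltnS e.
have a2 : (theta i < theta r.+1)%N by rewrite e.
have b1 : (r < i)%N by rewrite ltnNge; apply/negP => /(theta_mono_le _ h); rewrite leqNgt a1.
have b2 : (i < r.+1)%N by rewrite ltnNge; apply/negP => /(theta_mono_le _ h); rewrite leqNgt a2.
by move: b2; rewrite ltnS leqNgt b1.
Qed.

Lemma hlen_ge1' (theta : nat -> nat) r : (forall r, (theta r < theta r.+1)%N) -> (1 <= hlen theta r)%N.
Proof. by move=> h; rewrite /hlen subn_gt0. Qed.

Lemma Iblock_cons theta r : (forall r, (theta r < theta r.+1)%N) ->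
  Iblock theta r = (theta r).+1 :: iota (theta r).+2 (hlen theta r).-1.
Proof.
move=> h; rewrite /Iblock; have := hlen_ge1' theta r h.
by case: (hlen theta r).
Qed.

Lemma Iblock_tail theta r k : (forall r, (theta r < theta r.+1)%N) ->
  k \in iota (theta r).+2 (hlen theta r).-1 -> ((theta r).+1 < k)%N /\ (k <= theta r.+1)%N.
Proof.
move=> h; rewrite mem_iota => /andP[h1 h2]; split => //.
have := hlen_ge1' theta r h; rewrite /hlen in h2 * => hh.
have := h r; move: h2; lia.
Qed.


Lemma set_bnd {R : realType} (L : set R) (M t1 : R) :
  L t1 -> (forall t, L t -> `|t| <= M) -> `|inf L| <= M /\ `|sup L| <= M.
Proof.
move=> Lt hM.
have lb : lbound L (- M) by move=> t /hM; rewrite ler_norml => /andP[].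
have ub : ubound L M by move=> t /hM; rewrite ler_norml => /andP[].
have ne : L !=set0 by exists t1.
have i1 : - M <= inf L by apply: lb_le_inf.
have i2 : inf L <= t1 by apply: ge_inf => //; exists (- M).
have s1 : sup L <= M by apply: ge_sup.
have s2 : t1 <= sup L by apply: ub_le_sup => //; exists M.
have := hM _ Lt; rewrite !ler_norml => /andP[a1 a2].
split; apply/andP; split; lra.
Qed.

Lemma fuzzy_bnd {R : realType} (Z : R -> R) : fuzzy_number Z ->
  exists M, forall al, 0 <= al <= 1 -> `|lend Z al| <= M /\ `|rend Z al| <= M.
Proof.
case=> _ [t1 Zt1] _ _ cK.
have [M0 [_ HM]] := compact_bounded cK.
exists (M0 + 1) => al /andP[al0 al1].
have hK : forall t, closure [set t | 0 < Z t] t -> `|t| <= M0 + 1.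
  by move=> t Kt; apply: (HM (M0 + 1)) => //; lra.
have Ksup : [set t | 0 < Z t] t1 by rewrite /= Zt1 ltr01.
rewrite /lend /rend /lvl; case: ifPn => a0.
  apply: (@set_bnd R _ _ t1) => [|t /= h]; first by rewrite /= Zt1.
  by apply: hK; apply: subset_closure; rewrite /=; lra.
by apply: (@set_bnd R _ _ t1) => //; apply: subset_closure.
Qed.

Lemma sup_ge_gen {R : realType} (E : set R) x B :
  (forall y, E y -> y <= B) -> E x -> x <= sup E.
Proof. by move=> hB Ex; apply: ub_le_sup => //; exists B. Qed.

Lemma fdist_crisp_ge {R : realType} (a : R) Z : fuzzy_number Z ->
  `|a - lend Z 1| <= fdist (crisp a) Z.
Proof.
move=> fZ; have [M hM] := fuzzy_bnd _ fZ.
rewrite /fdist.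
apply: (le_trans _ (@sup_ge_gen R _ _ (`|a| + M) _ _)); last first.
- by exists 1; first by rewrite /= in_itv /= ler01 lexx.
- move=> y [al]; rewrite /= in_itv /= => hal <-.
  have [h1 h2] := hM _ hal.
  case/andP: hal => _ al1.
  rewrite !lend_crisp ?rend_crisp //.
  have := ler_normB a (lend Z al); have := ler_normB a (rend Z al).
  rewrite ge_max; move=> H1 H2; apply/andP; split; lra.
- by rewrite !lend_crisp ?rend_crisp // le_max lexx.
Qed.


Lemma cvg0_lb {R : realType} (g : nat -> R) (k : R) : 0 < k -> g @ \oo --> 0 ->
  (\forall r \near \oo, k <= g r) -> False.
Proof.
move=> k0 /cvgrPdist_lt /(_ k k0) H1 H2.
have [r [/= h1 h2]] := filter_ex (filterI H1 H2).
move: h1; rewrite sub0r normrN => h1.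
have := ler_norm (g r); lra.
Qed.

Lemma count_sum_le_in {R : realType} (P : pred nat) (F : nat -> R) (c : R) (s : seq nat) :
  (forall k, k \in s -> P k -> c <= F k) -> (forall k, k \in s -> 0 <= F k) ->
  (count P s)%:R * c <= \sum_(k <- s) F k.
Proof.
elim: s => [|k s IH] hP h0; first by rewrite big_nil mul0r.
rewrite big_cons /= natrD mulrDl; apply: lerD.
  by case: (boolP (P k)) => /= Pk; rewrite ?mul1r ?hP ?mem_head // mul0r h0 ?mem_head.
apply: IH => j js; [apply: hP|apply: h0]; by rewrite inE js orbT.
Qed.

Lemma size_sum_le_in {R : realType} (F : nat -> R) (c : R) (s : seq nat) :
  (forall k, k \in s -> c <= F k) -> 
  (size s)%:R * c <= \sum_(k <- s) F k.
Proof.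
elim: s => [|k s IH] hP; first by rewrite big_nil mul0r.
rewrite big_cons /= -natr1 mulrDl mul1r addrC; apply: lerD; first by apply: hP; rewrite mem_head.
by apply: IH => j js; apply: hP; rewrite inE js orbT.
Qed.

Lemma part2 {R : realType} (m : nat) (theta : nat -> nat) (p : R) :
  lacunary R theta -> 0 < p ->
  exists X, in_S 1 theta m X /\ ~ in_N 1 p theta m X.
Proof.
move=> [_ Hinc Hoo] p0.
pose y := spike theta p.
pose X := fun j => crisp (Sinv m y j).
have fdX : forall k, fdelta m X k = crisp (y k).
  by move=> k; rewrite /X fdelta_crisp rdelta_Sinv.
have hpos : forall r, (0 : R) < (hlen theta r)%:R.
  by move=> r; rewrite ltr0n hlen_ge1.
have ytail : forall r k, k \in iota (theta r).+2 (hlen theta r).-1 -> y k = 0.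
  move=> r k /(Iblock_tail _ _ _ Hinc) [h1 h2]; exact: spike_tail h1 h2.
exists X; split.
  split; first by move=> k; exact: crisp_fuzzy.
  exists (crisp 0); split; first exact: crisp_fuzzy.
  move=> eps eps0.
  apply: (@squeeze_cvgr _ _ _ _ (fun=> 0) (fun r => ((hlen theta r)%:R)^-1)); last first.
  - by apply/(@gtr0_cvgV0 _ _ _ _ (fun r => (hlen theta r)%:R)) => //; exact: nearW.
  - exact: cvg_cst.
  apply: nearW => r.
  rewrite powRr1 ?ler0n //.
  apply/andP; split; first by rewrite divr_ge0.
  rewrite ler_pdivrMr // mulVf ?gt_eqF //.
  rewrite Iblock_cons //= (eq_in_count (a2 := pred0)); last first.
    move=> k kin /=; rewrite fdX fdist_crisp (ytail _ _ kin) subr0 normr0.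
    by apply/negbTE; rewrite -ltNge.
  rewrite count_pred0 addn0; have hb : forall b : bool, ((b : nat)%:R : R) <= 1 by case => /=; rewrite ?ler01 ?lexx.
  exact: hb.
move=> [_ [Z [fZ HN]]].
set c := lend Z 1.
pose g := fun r => (\sum_(k <- Iblock theta r) fdist (fdelta m X k) Z `^ p)
          / ((hlen theta r)%:R `^ 1).
have Dge0 : forall k, 0 <= fdist (fdelta m X k) Z `^ p by move=> k; exact: powR_ge0.
have Dge : forall k, `|y k - c| `^ p <= fdist (fdelta m X k) Z `^ p.
  move=> k; have := ge0_ler_powR (ltW p0); apply.
  - by rewrite nnegrE.
  - by rewrite nnegrE fdist_ge0.
  - by rewrite fdX; exact: fdist_crisp_ge.
have bnd : forall r, `|y (theta r).+1 - c| `^ p + ((hlen theta r).-1)%:R * `|c| `^ p <=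
    \sum_(k <- Iblock theta r) fdist (fdelta m X k) Z `^ p.
  move=> r; rewrite Iblock_cons // big_cons; apply: lerD; first exact: Dge.
  have := @size_sum_le_in R (fun k => fdist (fdelta m X k) Z `^ p) (`|c| `^ p) (iota (theta r).+2 (hlen theta r).-1).
  rewrite size_iota; apply => k kin.
  by have := Dge k; rewrite (ytail _ _ kin) sub0r normrN.
have gE : forall r, g r = (\sum_(k <- Iblock theta r) fdist (fdelta m X k) Z `^ p)
          / (hlen theta r)%:R by move=> r; rewrite /g powRr1 ?ler0n.
have [c0|cn0] := eqVneq c 0.
  apply: (@cvg0_lb R g 1 ltr01 HN); apply: nearW => r.
  rewrite gE ler_pdivlMr // mul1r; apply: le_trans (bnd r).
  rewrite c0 normr0 powR0 ?gt_eqF // mulr0 addr0 subr0 /y spike_at //.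
  rewrite ger0_norm ?powR_ge0 // -powRrM mulVf ?gt_eqF // powRr1 ?ler0n //.
have k0 : 0 < `|c| `^ p / 2 by rewrite divr_gt0 // powR_gt0 // normr_gt0.
apply: (@cvg0_lb R g _ k0 HN).
have H : \forall r \near \oo, (2:R) <= (hlen theta r)%:R.
  exact: (cvgry_ge Hoo).
apply: filterS H => r /= h2.
rewrite gE ler_pdivlMr //; apply: le_trans (bnd r).
have e : (hlen theta r)%:R = ((hlen theta r).-1)%:R + 1 :> R.
  by rewrite natr1 prednK // hlen_ge1.
have hy : 0 <= `|y (theta r).+1 - c| `^ p by exact: powR_ge0.
have hc : 0 <= `|c| `^ p by exact: powR_ge0.
move: h2; rewrite e => h2.
set u := ((hlen theta r).-1)%:R in h2 *.
set w := `|c| `^ p in hc k0 *.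
nra.
Qed.

End Helpers.

Theorem theorem2p7 (R : realType) (m : nat) (theta : nat -> nat) (p : R) :
  lacunary R theta -> 0 < p ->
  (forall beta gamma : R, 0 < beta -> beta <= gamma -> gamma <= 1 ->
     (forall X, in_N beta p theta m X -> in_S gamma theta m X) /\
     (forall X X0, fuzzy_seq X -> fuzzy_number X0 ->
        N_conv beta p theta m X X0 -> S_conv gamma theta m X X0)) /\
  (exists beta gamma : R, [/\ 0 < beta, beta <= gamma, gamma <= 1 &
     exists X, in_S gamma theta m X /\ ~ in_N beta p theta m X]).
Proof.
move=> hl p0; split.
  move=> beta gamma b0 bg g1; split.
    move=> X [fX [X0 [fX0 HN]]]; split => //; exists X0; split => //.
    exact: (@Helpers.part1 R m theta p beta gamma X X0 hl p0 b0 bg HN).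
  move=> X X0 _ _ HN.
  exact: (@Helpers.part1 R m theta p beta gamma X X0 hl p0 b0 bg HN).
exists 1, 1; split; [lra|lra|lra|].
exact: (@Helpers.part2 R m theta p hl p0).
Qed.
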